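(* Let $\mu\in\mathbb{R}\setminus\{0\}$ and let $X$ have the skew-symmetric-Laplace-uniform density $g$ with parameter $\mu$ (defined in the context), and write $\mu'_k=E(X^k)$. If $\mu>0$, then $$\mu'_1=\frac{2}{\mu}-\left(1+\frac{2}{\mu}\right)e^{-\mu},\quad \mu'_2=2,\quad \mu'_3=\frac{24}{\mu}-e^{-\mu}\left[\mu^2+6\mu+18+\frac{24}{\mu}\right],\quad \mu'_4=24.$$ If $\mu<0$, the same formulas hold after replacing $\mu$ by $-\mu$ in each expression and additionally multiplying the expressions for the odd-order moments $\mu'_1,\mu'_3$ by $-1$. Furthermore, for every $\mu\neq 0$ and every integer $r\ge 1$, $\mu'_{2r}=(2r)!$.
   Context: For $\mu\in\mathbb{R}\setminus\{0\}$, the skew-symmetric-Laplace-uniform distribution $SSLUD(\mu)$ is the distribution on $\mathbb{R}$ with density $$g(x)=\begin{cases} 0 & \text{if } x/\mu<-1,\\ e^{-|x|}\left(\dfrac{x}{2\mu}+\dfrac12\right) & \text{if } -1\le x/\mu<1,\\ e^{-|x|} & \text{if } x/\mu\ge 1.\end{cases}$$ *)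

(* Defs.v *)
From HB Require Import structures.
From mathcomp Require Import all_boot all_order all_algebra.
From mathcomp Require Import all_classical all_reals all_analysis.
Set Implicit Arguments. Unset Strict Implicit. Unset Printing Implicit Defensive.
Import Order.TTheory GRing.Theory Num.Theory.
Local Open Scope ring_scope.

Definition sslud_density (R : realType) (mu x : R) : R :=
  if x / mu < -1 then 0
  else if x / mu < 1 then expR (- `|x|) * (x / (2 * mu) + 1 / 2)
  else expR (- `|x|).

Definition sslud_moment (R : realType) (mu : R) (k : nat) : \bar R :=
  (\int[@lebesgue_measure R]_x ((x ^+ k * sslud_density mu x)%:E))%E.

(* Main.v *)
Require Import Defs.
From HB Require Import structures.
From mathcomp Require Import all_boot all_order all_algebra.
From mathcomp Require Import all_classical all_reals all_analysis.
From mathcomp Require Import ring lra.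
From mathcomp Require Import measurable_realfun.
Import Order.TTheory GRing.Theory Num.Theory.
Import numFieldNormedType.Exports.
Local Open Scope ring_scope.
Local Open Scope classical_set_scope.

Section S.
Context {R : realType}.

Fixpoint Pol (s : R) (m : nat) (x : R) : R :=
  match m with 0 => 1 | m'.+1 => x ^+ m'.+1 + s * m'.+1%:R * Pol s m' x end.

Lemma is_derive_Pol (s : R) m (x : R) : s = 1 \/ s = -1 ->
  is_derive x (1:R) (Pol s m) (s * (Pol s m x - x ^+ m)).
Proof.
move=> ss; elim: m => [|m IH].
  by rewrite /= expr0 subrr mulr0; exact: is_derive_cst.
have -> : Pol s m.+1 = (@id R ^+ m.+1) + (s * m.+1%:R) \*: Pol s m.
  by apply/funext => y; rewrite !fctE.
apply: is_derive_eq.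
rewrite /GRing.scale /= mulr1 !fctE /= /GRing.scale /=.
by case: ss => ->; ring.
Qed.

Lemma is_derive_expRN (x : R) : is_derive x (1:R) (fun y : R => expR (- y)) (- expR (- x)).
Proof.
have E : (fun y : R => expR (- y)) = (fun y => (expR y)^-1).
  by apply/funext => y; rewrite expRN.
rewrite E; apply: DeriveDef.
  apply: derivableV; first by rewrite expR_eq0.
  exact: ex_derive.
rewrite deriveV ?expR_eq0 //.
rewrite derive_val expRN /GRing.scale /=. have := expR_gt0 x.
move=> h; clear E. field. lra.
Qed.

Definition FP k (x : R) := - (expR (- x) * Pol 1 k x).
Definition FQ k (x : R) := expR x * Pol (-1) k x.

Lemma is_derive_FP k (x : R) : is_derive x (1:R) (FP k) (expR (- x) * x ^+ k).
Proof.
have -> : FP k = - ((fun y => expR (- y)) * Pol 1 k) by apply/funext => y; rewrite !fctE.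
have h1 := is_derive_expRN x.
have h2 := @is_derive_Pol 1 k x (or_introl erefl).
have := is_deriveN (is_deriveM h1 h2).
move=> h; apply: is_derive_eq h _.
rewrite /GRing.scale /=; ring.
Qed.

Lemma is_derive_FQ k (x : R) : is_derive x (1:R) (FQ k) (expR x * x ^+ k).
Proof.
have -> : FQ k = (@expR R * Pol (-1) k) by apply/funext => y; rewrite !fctE.
have h1 := is_derive_expR x.
have h2 := @is_derive_Pol (-1) k x (or_intror erefl).
have := is_deriveM h1 h2.
move=> h; apply: is_derive_eq h _.
rewrite /GRing.scale /=; ring.
Qed.

Lemma is_derive_cont (f : R -> R) (x : R) df : is_derive x (1:R) f df -> {for x, continuous f}.
Proof.
move=> h; have : derivable f x 1 by exact: ex_derive.
by move/derivable1_diffP/differentiable_continuous.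
Qed.

Lemma cont_integrand (k : nat) (c : R) (b : bool) :
  continuous (fun x : R => x ^+ k * (expR (if b then x else - x) * (x / c + 1 / 2))).
Proof.
move=> x; apply: cvgM; first exact: exprn_continuous.
apply: cvgM.
  case: b; first exact: continuous_expR.
  apply: continuous_comp; first exact: continuousN. exact: continuous_expR.
apply: cvgD; last exact: cvg_cst.
apply: cvgMr_tmp; exact: cvg_id.
Qed.

Lemma continuous_expRN : continuous (fun x : R => expR (- x)).
Proof. move=> x; exact: is_derive_cont (is_derive_expRN x). Qed.

Lemma powexpN_le (j : nat) (x : R) : 0 < x ->
  x ^+ j * expR (- x) <= j.+1`!%:R * x^-1.
Proof.
move=> x0.
have F0 : 0 < (j.+1`!%:R : R) by rewrite ltr0n fact_gt0.
have e0 := expR_gt0 x.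
have h : x ^+ j.+1 <= j.+1`!%:R * expR x.
  have := expR_ge1Dxn j (ltW x0).
  rewrite -ler_pdivrMl //.
  move=> H; apply: le_trans H; rewrite mulrC lerDr //.
have -> : x ^+ j * expR (- x) = x ^+ j.+1 * (x * expR x)^-1.
  rewrite expRN exprS; field; apply/andP; split; apply/lt0r_neq0 => //.
have -> : j.+1`!%:R * x^-1 = (j.+1`!%:R * expR x) * (x * expR x)^-1.
  field; apply/andP; split; apply/lt0r_neq0 => //.
apply: ler_wpM2r => //; rewrite invr_ge0; exact/ltW/mulr_gt0.
Qed.

Lemma cvg_powexpN (j : nat) : x ^+ j * expR (- x) @[x --> +oo%R] --> (0:R).
Proof.
apply: (@squeeze_cvgr _ _ _ _ (fun=> 0) (fun x : R => j.+1`!%:R * x^-1)).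
- near=> x.
  have x0 : 0 < x by near: x; apply: nbhs_pinfty_gt; exact: num_real.
  apply/andP; split; first by apply: mulr_ge0; [exact/exprn_ge0/ltW|exact: expR_ge0].
  exact: powexpN_le.
- exact: cvg_cst.
- rewrite -(mulr0 (j.+1`!%:R : R)); apply: cvgMl_tmp.
  apply/gtr0_cvgV0.
    near=> x; near: x; apply: nbhs_pinfty_gt; exact: num_real.
  apply/cvgryPge => A; apply: nbhs_pinfty_ge; exact: num_real.
Unshelve. all: end_near.
Qed.

Lemma cvg_FP k : FP k x @[x --> +oo%R] --> (0:R).
Proof.
rewrite /FP -oppr0; apply: cvgN.
elim: k => [|k IH].
  by under eq_fun do rewrite /= mulr1; exact: cvgr_expR.
have -> : (fun x => expR (- x) * Pol 1 k.+1 x) =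
    (fun x => x ^+ k.+1 * expR (- x) + k.+1%:R * (expR (- x) * Pol 1 k x)).
  by apply/funext => x /=; ring.
rewrite -[0](addr0 0); apply: cvgD; first exact: cvg_powexpN.
rewrite -(mulr0 (k.+1%:R : R)); exact: cvgMl_tmp.
Qed.

Lemma continuous_tail k : continuous (fun x : R => x ^+ k * expR (- x)).
Proof.
move=> x; apply: cvgM; first exact: exprn_continuous.
exact: continuous_expRN.
Qed.

Lemma tail_int k (a : R) : 0 <= a ->
  (\int[@lebesgue_measure R]_(x in `[a, +oo[) (x ^+ k * expR (- x))%:E =
   (expR (- a) * Pol 1 k a)%:E)%E.
Proof.
move=> a0.
rewrite (@ge0_continuous_FTC2y R _ (FP k) a 0).
- by rewrite /FP -EFinB sub0r opprK.
- move=> x ax; apply: mulr_ge0; [apply: exprn_ge0; exact: le_trans ax|exact: expR_ge0].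
- apply: continuous_subspaceT; exact: continuous_tail.
- exact: cvg_FP.
- by move=> x _; case: (is_derive_FP k x).
- apply: cvg_at_right_filter; exact: is_derive_cont (is_derive_FP k a).
- move=> x _; rewrite derive1E; case: (is_derive_FP k x) => _ ->. by rewrite mulrC.
Qed.

Lemma cont_neg k (mu : R) : continuous (fun x : R => x ^+ k * (expR x * (x / (2 * mu) + 1 / 2))).
Proof. exact: (cont_integrand k (2 * mu) true). Qed.

Lemma cont_pos k (mu : R) : continuous (fun x : R => x ^+ k * (expR (- x) * (x / (2 * mu) + 1 / 2))).
Proof. exact: (cont_integrand k (2 * mu) false). Qed.

Definition AN (mu : R) k (x : R) := 1 / (2 * mu) * FQ k.+1 x + 1 / 2 * FQ k x.
Definition AP (mu : R) k (x : R) := 1 / (2 * mu) * FP k.+1 x + 1 / 2 * FP k x.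

Lemma is_derive_AN mu k (x : R) :
  is_derive x (1:R) (AN mu k) (x ^+ k * (expR x * (x / (2 * mu) + 1 / 2))).
Proof.
have -> : AN mu k = (1 / (2 * mu)) \*: FQ k.+1 + (1 / 2) \*: FQ k.
  by apply/funext => y; rewrite !fctE.
have h := is_deriveD (is_deriveZ (1 / (2 * mu)) (is_derive_FQ k.+1 x))
                     (is_deriveZ (1 / 2) (is_derive_FQ k x)).
apply: is_derive_eq h _; rewrite /GRing.scale /=; rewrite exprS; ring.
Qed.

Lemma is_derive_AP mu k (x : R) :
  is_derive x (1:R) (AP mu k) (x ^+ k * (expR (- x) * (x / (2 * mu) + 1 / 2))).
Proof.
have -> : AP mu k = (1 / (2 * mu)) \*: FP k.+1 + (1 / 2) \*: FP k.
  by apply/funext => y; rewrite !fctE.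
have h := is_deriveD (is_deriveZ (1 / (2 * mu)) (is_derive_FP k.+1 x))
                     (is_deriveZ (1 / 2) (is_derive_FP k x)).
apply: is_derive_eq h _; rewrite /GRing.scale /=; rewrite exprS; ring.
Qed.

Lemma FTC_gen (f F : R -> R) (a b : R) : a < b -> continuous f ->
  (forall x, is_derive x (1:R) F (f x)) ->
  (\int[@lebesgue_measure R]_(x in `[a, b]) (f x)%:E = (F b - F a)%:E)%E.
Proof.
move=> ab cf dF; rewrite EFinB; apply: continuous_FTC2 => //.
- exact: continuous_subspaceT.
- split.
  + by move=> x _; case: (dF x).
  + apply: cvg_at_right_filter; exact: is_derive_cont (dF a).
  + apply: cvg_at_left_filter; exact: is_derive_cont (dF b).
- by move=> x _; rewrite derive1E; case: (dF x).
Qed.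

Lemma int_neg k mu (a b : R) : a < b ->
  (\int[@lebesgue_measure R]_(x in `[a, b]) (x ^+ k * (expR x * (x / (2 * mu) + 1 / 2)))%:E
   = (AN mu k b - AN mu k a)%:E)%E.
Proof.
move=> ab; exact: (FTC_gen _ _ _ _ ab (cont_neg k mu) (is_derive_AN mu k)).
Qed.

Lemma int_pos k mu (a b : R) : a < b ->
  (\int[@lebesgue_measure R]_(x in `[a, b]) (x ^+ k * (expR (- x) * (x / (2 * mu) + 1 / 2)))%:E
   = (AP mu k b - AP mu k a)%:E)%E.
Proof.
move=> ab; exact: (FTC_gen _ _ _ _ ab (cont_pos k mu) (is_derive_AP mu k)).
Qed.

Lemma ltail_int k (a : R) : 0 <= a ->
  (\int[@lebesgue_measure R]_(x in `]-oo, (- a)%R]) (x ^+ k * expR x)%:E =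
   ((-1) ^+ k * (expR (- a) * Pol 1 k a))%:E)%E.
Proof.
move=> a0.
pose G (x : R) := (- x) ^+ k * expR x.
have cG : continuous G.
  move=> x; apply: cvgM; last exact: continuous_expR.
  apply: (@continuous_comp _ _ _ (-%R) (fun x : R => x ^+ k)); first exact: opp_continuous.
  exact: exprn_continuous.
have IG : (\int[@lebesgue_measure R]_(x in `]-oo, (- a)%R]) (G x)%:E =
           (expR (- a) * Pol 1 k a)%:E)%E.
  rewrite ge0_integration_by_substitutionNy.
  - rewrite -(tail_int k a a0); apply: eq_integral => x _.
    by rewrite /G /= opprK.
  - exact: continuous_subspaceT.
  - move=> x; rewrite in_itv /= => xa.
    apply: mulr_ge0; last exact: expR_ge0.
    apply: exprn_ge0; rewrite oppr_ge0; apply: le_trans (ltW xa) _.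
    by rewrite oppr_le0.
have E : forall x, x ^+ k * expR x = (-1) ^+ k * G x.
  by move=> x; rewrite /G mulrA -exprMn mulN1r opprK.
under eq_integral do rewrite E.
rewrite -signr_odd; case: (odd k); last first.
  by rewrite expr0; under eq_integral do rewrite mul1r; rewrite IG mul1r.
rewrite expr1; under eq_integral do rewrite mulN1r EFinN.
rewrite integral_ge0N; first by rewrite IG mulN1r EFinN.
move=> x; rewrite /= in_itv /= => xa.
rewrite lee_fin; apply: mulr_ge0; last exact: expR_ge0.
apply: exprn_ge0; rewrite oppr_ge0; apply: le_trans xa _.
by rewrite oppr_le0.
Qed.

Section Dens.
Variable mu : R.

Lemma dens_p1 x : 0 < mu -> x < - mu -> sslud_density mu x = 0.
Proof.
move=> m0 h; rewrite /sslud_density ltr_pdivrMr // ifT //; lra.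
Qed.

Lemma dens_p2 x : 0 < mu -> - mu <= x -> x <= 0 ->
  sslud_density mu x = expR x * (x / (2 * mu) + 1 / 2).
Proof.
move=> m0 h1 h2; rewrite /sslud_density !ltr_pdivrMr // ifF; last by apply/negbTE; rewrite -leNgt; lra.
by rewrite ifT ?ler0_norm ?opprK //; lra.
Qed.

Lemma dens_p3 x : 0 < mu -> 0 < x -> x < mu ->
  sslud_density mu x = expR (- x) * (x / (2 * mu) + 1 / 2).
Proof.
move=> m0 h1 h2; rewrite /sslud_density !ltr_pdivrMr // ifF; last by apply/negbTE; rewrite -leNgt; lra.
by rewrite ifT ?gtr0_norm //; lra.
Qed.

Lemma dens_p4 x : 0 < mu -> mu <= x -> sslud_density mu x = expR (- x).
Proof.
move=> m0 h1; rewrite /sslud_density !ltr_pdivrMr // ifF; last by apply/negbTE; rewrite -leNgt; lra.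
by rewrite ifF ?ger0_norm //; [lra|apply/negbTE; rewrite -leNgt; lra].
Qed.

Lemma dens_n1 x : mu < 0 -> x <= mu -> sslud_density mu x = expR x.
Proof.
move=> m0 h1; rewrite /sslud_density !ltr_ndivrMr // ifF; last by apply/negbTE; rewrite -leNgt; lra.
by rewrite ifF ?ler0_norm ?opprK //; [lra|apply/negbTE; rewrite -leNgt; lra].
Qed.

Lemma dens_n2 x : mu < 0 -> mu < x -> x <= 0 ->
  sslud_density mu x = expR x * (x / (2 * mu) + 1 / 2).
Proof.
move=> m0 h1 h2; rewrite /sslud_density !ltr_ndivrMr // ifF; last by apply/negbTE; rewrite -leNgt; lra.
by rewrite ifT ?ler0_norm ?opprK //; lra.
Qed.

Lemma dens_n3 x : mu < 0 -> 0 < x -> x <= - mu ->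
  sslud_density mu x = expR (- x) * (x / (2 * mu) + 1 / 2).
Proof.
move=> m0 h1 h2; rewrite /sslud_density !ltr_ndivrMr // ifF; last by apply/negbTE; rewrite -leNgt; lra.
by rewrite ifT ?gtr0_norm //; lra.
Qed.

Lemma dens_n4 x : mu < 0 -> - mu < x -> sslud_density mu x = 0.
Proof.
move=> m0 h; rewrite /sslud_density ltr_ndivrMr // ifT //; lra.
Qed.
End Dens.

Lemma int_eq_on (D : set R) (f g : R -> R) : (forall x, D x -> f x = g x) ->
  (\int[@lebesgue_measure R]_(x in D) (f x)%:E = \int[@lebesgue_measure R]_(x in D) (g x)%:E)%E.
Proof. by move=> h; apply: eq_integral => x; rewrite inE => /h ->. Qed.

Lemma mfun_piece (D : set R) (g h : R -> R) : continuous g ->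
  (forall x, D x -> h x = g x) -> measurable_fun D (EFin \o h).
Proof.
move=> cg e; apply: (@eq_measurable_fun _ _ _ _ D (fun x => (g x)%:E)).
  by move=> x; rewrite inE /= => /e ->.
apply/measurable_EFinP; apply: measurable_funTS; exact: continuous_measurable_fun.
Qed.

Lemma moment_pos k (mu : R) : 0 < mu -> sslud_moment mu k =
  (AN mu k 0 - AN mu k (- mu) + ((AP mu k mu - AP mu k 0) + expR (- mu) * Pol 1 k mu))%:E.
Proof.
move=> m0.
have setTE : [set: R] = `]-oo, (- mu)%R[ `|` (`[(- mu)%R, 0%R] `|` (`]0%R, mu[ `|` `[mu, +oo[)).
  apply/seteqP; split => x // _ /=; rewrite !in_itv /=.
  case: (ltP x (- mu)) => h1; [by left|right].
  case: (leP x 0) => h2; [by left; apply/andP; split|right].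
  case: (ltP x mu) => h3; [by left; apply/andP; split|by right].
pose h x := x ^+ k * sslud_density mu x.
have m1 : measurable_fun `]-oo, (- mu)%R[ (EFin \o h).
  apply: (@mfun_piece _ (fun=> 0)); first exact: cst_continuous.
  by move=> x /=; rewrite in_itv /= => hx; rewrite /h dens_p1 // mulr0.
have m2 : measurable_fun `[(- mu)%R, 0%R] (EFin \o h).
  apply: (@mfun_piece _ _ _ (cont_neg k mu)).
  by move=> x /=; rewrite in_itv /= => /andP[hx1 hx2]; rewrite /h dens_p2.
have m3 : measurable_fun `]0%R, mu[ (EFin \o h).
  apply: (@mfun_piece _ _ _ (cont_pos k mu)).
  by move=> x /=; rewrite in_itv /= => /andP[hx1 hx2]; rewrite /h dens_p3.
have m4 : measurable_fun `[mu, +oo[ (EFin \o h).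
  apply: (@mfun_piece _ _ _ (continuous_tail k)).
  by move=> x /=; rewrite in_itv /= andbT => hx; rewrite /h dens_p4.
have m34 : measurable_fun (`]0%R, mu[ `|` `[mu, +oo[) (EFin \o h).
  by apply/measurable_funU => //; split.
have m234 : measurable_fun (`[(- mu)%R, 0%R] `|` (`]0%R, mu[ `|` `[mu, +oo[)) (EFin \o h).
  { apply/measurable_funU. all: try exact: measurableU. all: try done. all: try by split. }
have m1234 : measurable_fun (`]-oo, (- mu)%R[ `|` (`[(- mu)%R, 0%R] `|` (`]0%R, mu[ `|` `[mu, +oo[))) (EFin \o h).
  { apply/measurable_funU. all: try (apply: measurableU => //; exact: measurableU). all: try done. all: try by split. }
rewrite /sslud_moment setTE.
rewrite integral_setU.
4: exact: m1234.
2: done.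
2: by apply: measurableU => //; exact: measurableU.
2: apply/disj_setPS => x [] /=; rewrite !in_itv /= => hx.
2: by move=> [/andP[? ?]|/= [/andP[? ?]|/andP[? ?]]]; lra.
rewrite integral_setU.
4: exact: m234.
2: done.
2: exact: measurableU.
2: apply/disj_setPS => x [] /=; rewrite !in_itv /= => /andP[? ?].
2: by move=> [/andP[? ?]|/= /andP[? ?]]; lra.
rewrite integral_setU.
4: exact: m34.
2,3: done.
2: by apply/disj_setPS => x [] /=; rewrite !in_itv /= => /andP[? ?] /andP[? ?]; lra.
rewrite integral0_eq; last first.
  by move=> x /=; rewrite in_itv /= => hx; rewrite dens_p1 // mulr0.
rewrite add0e.
rewrite (@int_eq_on _ _ (fun x => x ^+ k * (expR x * (x / (2 * mu) + 1 / 2)))); last first.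
  by move=> x /=; rewrite in_itv /= => /andP[hx1 hx2]; rewrite dens_p2.
rewrite int_neg; last lra.
rewrite (@int_eq_on _ _ (fun x => x ^+ k * (expR (- x) * (x / (2 * mu) + 1 / 2)))); last first.
  by move=> x /=; rewrite in_itv /= => /andP[hx1 hx2]; rewrite dens_p3.
rewrite -(@integral_itv_bndoo _ _ _ _ true false); last first.
  apply/measurable_EFinP; apply: measurable_funTS; apply: continuous_measurable_fun.
  exact: (cont_pos k mu).
rewrite int_pos //.
rewrite (@int_eq_on _ _ (fun x => x ^+ k * expR (- x))); last first.
  by move=> x /=; rewrite in_itv /= andbT => hx; rewrite dens_p4.
rewrite tail_int; last exact: ltW.
by rewrite -!EFinD.
Qed.

Lemma continuous_ltail k : continuous (fun x : R => x ^+ k * expR x).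
Proof.
move=> x; apply: cvgM; first exact: exprn_continuous.
exact: continuous_expR.
Qed.

Lemma moment_neg k (mu : R) : mu < 0 -> sslud_moment mu k =
  ((-1) ^+ k * (expR mu * Pol 1 k (- mu)) +
   (AN mu k 0 - AN mu k mu + (AP mu k (- mu) - AP mu k 0)))%:E.
Proof.
move=> m0.
have setTE : [set: R] = `]-oo, mu] `|` (`]mu, 0%R] `|` (`]0%R, (- mu)%R] `|` `](- mu)%R, +oo[)).
  apply/seteqP; split => x // _ /=; rewrite !in_itv /=.
  case: (leP x mu) => h1; [by left|right].
  case: (leP x 0) => h2; [by left; apply/andP; split|right].
  case: (leP x (- mu)) => h3; [by left; apply/andP; split|by right].
pose h x := x ^+ k * sslud_density mu x.
have m1 : measurable_fun `]-oo, mu] (EFin \o h).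
  apply: (@mfun_piece _ _ _ (continuous_ltail k)).
  by move=> x /=; rewrite in_itv /= => hx; rewrite /h dens_n1.
have m2 : measurable_fun `]mu, 0%R] (EFin \o h).
  apply: (@mfun_piece _ _ _ (cont_neg k mu)).
  by move=> x /=; rewrite in_itv /= => /andP[hx1 hx2]; rewrite /h dens_n2.
have m3 : measurable_fun `]0%R, (- mu)%R] (EFin \o h).
  apply: (@mfun_piece _ _ _ (cont_pos k mu)).
  by move=> x /=; rewrite in_itv /= => /andP[hx1 hx2]; rewrite /h dens_n3.
have m4 : measurable_fun `](- mu)%R, +oo[ (EFin \o h).
  apply: (@mfun_piece _ (fun=> 0)); first exact: cst_continuous.
  by move=> x /=; rewrite in_itv /= andbT => hx; rewrite /h dens_n4 // mulr0.
have m34 : measurable_fun (`]0%R, (- mu)%R] `|` `](- mu)%R, +oo[) (EFin \o h).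
  { apply/measurable_funU. all: try exact: measurableU. all: try done. all: try by split. }
have m234 : measurable_fun (`]mu, 0%R] `|` (`]0%R, (- mu)%R] `|` `](- mu)%R, +oo[)) (EFin \o h).
  { apply/measurable_funU. all: try exact: measurableU. all: try done. all: try by split. }
have m1234 : measurable_fun (`]-oo, mu] `|` (`]mu, 0%R] `|` (`]0%R, (- mu)%R] `|` `](- mu)%R, +oo[))) (EFin \o h).
  { apply/measurable_funU. all: try (apply: measurableU => //; exact: measurableU). all: try done. all: try by split. }
rewrite /sslud_moment setTE.
rewrite integral_setU.
4: exact: m1234.
2: done.
2: by apply: measurableU => //; exact: measurableU.
2: apply/disj_setPS => x [] /=; rewrite !in_itv /= => hx.
2: by move=> [/andP[? ?]|/= [/andP[? ?]|/andP[? ?]]]; lra.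
rewrite integral_setU.
4: exact: m234.
2: done.
2: exact: measurableU.
2: apply/disj_setPS => x [] /=; rewrite !in_itv /= => /andP[? ?].
2: by move=> [/andP[? ?]|/= /andP[? ?]]; lra.
rewrite integral_setU.
4: exact: m34.
2,3: done.
2: by apply/disj_setPS => x [] /=; rewrite !in_itv /= => /andP[? ?] /andP[? ?]; lra.
rewrite (@int_eq_on _ _ (fun x => x ^+ k * expR x)); last first.
  by move=> x /=; rewrite in_itv /= => hx; rewrite dens_n1.
have := @ltail_int k (- mu); rewrite opprK => ->; last lra.
rewrite (@int_eq_on _ _ (fun x => x ^+ k * (expR x * (x / (2 * mu) + 1 / 2)))); last first.
  by move=> x /=; rewrite in_itv /= => /andP[hx1 hx2]; rewrite dens_n2.
rewrite (@integral_itv_bndoo _ _ _ _ false false); last first.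
  apply/measurable_EFinP; apply: measurable_funTS; apply: continuous_measurable_fun.
  exact: (cont_neg k mu).
rewrite -(@integral_itv_bndoo _ _ _ _ true false); last first.
  apply/measurable_EFinP; apply: measurable_funTS; apply: continuous_measurable_fun.
  exact: (cont_neg k mu).
rewrite int_neg //.
rewrite (@int_eq_on _ _ (fun x => x ^+ k * (expR (- x) * (x / (2 * mu) + 1 / 2)))); last first.
  by move=> x /=; rewrite in_itv /= => /andP[hx1 hx2]; rewrite dens_n3.
rewrite (@integral_itv_bndoo _ _ _ _ false false); last first.
  apply/measurable_EFinP; apply: measurable_funTS; apply: continuous_measurable_fun.
  exact: (cont_pos k mu).
rewrite -(@integral_itv_bndoo _ _ _ _ true false); last first.
  apply/measurable_EFinP; apply: measurable_funTS; apply: continuous_measurable_fun.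
  exact: (cont_pos k mu).
rewrite int_pos; last lra.
rewrite integral0_eq; last first.
  by move=> x /=; rewrite in_itv /= andbT => hx; rewrite dens_n4 // mulr0.
by rewrite adde0 -!EFinD.
Qed.

Lemma Pol_at0 (s : R) m : Pol s m 0 = s ^+ m * m`!%:R.
Proof.
elim: m => [|m IH]; first by rewrite /= expr0 mul1r.
by rewrite /= IH expr0n /= add0r factS natrM exprS; ring.
Qed.

Lemma PolN m (x : R) : Pol (-1) m (- x) = (-1) ^+ m * Pol 1 m x.
Proof.
elim: m => [|m IH]; first by rewrite /= expr0 mulr1.
have -> : Pol (-1) m.+1 (- x) = (- x) ^+ m.+1 + (-1) * m.+1%:R * Pol (-1) m (- x) by [].
have -> : Pol 1 m.+1 x = x ^+ m.+1 + 1 * m.+1%:R * Pol 1 m x by [].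
by rewrite IH (exprNn x m.+1) !exprS; ring.
Qed.

Lemma PolN' m (x : R) : Pol (-1) m x = (-1) ^+ m * Pol 1 m (- x).
Proof. by rewrite -PolN opprK. Qed.

End S.

Local Close Scope classical_set_scope.

Theorem mainTheorem3 (R : realType) (mu : R) (hmu : mu != 0) :
  (0 < mu ->
     sslud_moment mu 1 = (2 / mu - (1 + 2 / mu) * expR (- mu))%:E /\
     sslud_moment mu 2 = 2%:E /\
     sslud_moment mu 3 =
       (24 / mu - expR (- mu) * (mu ^+ 2 + 6 * mu + 18 + 24 / mu))%:E /\
     sslud_moment mu 4 = 24%:E) /\
  (mu < 0 ->
     sslud_moment mu 1 = (- (2 / (- mu) - (1 + 2 / (- mu)) * expR (- (- mu))))%:E /\
     sslud_moment mu 2 = 2%:E /\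
     sslud_moment mu 3 =
       (- (24 / (- mu) - expR (- (- mu)) *
            ((- mu) ^+ 2 + 6 * (- mu) + 18 + 24 / (- mu))))%:E /\
     sslud_moment mu 4 = 24%:E) /\
  (forall r : nat, (1 <= r)%N -> sslud_moment mu (2 * r) = ((2 * r)`!)%:R%:E).
Proof.
split.
  move=> m0; rewrite !moment_pos //.
  rewrite /AN /AP /FQ /FP /= ?oppr0 ?expR0 ?opprK.
  split. congr EFin. field. exact: hmu.
  split; [congr EFin; field; exact: hmu|].
  split; [congr EFin; field; exact: hmu|].
  congr EFin; field; exact: hmu.
split.
  move=> m0; rewrite !moment_neg //.
  rewrite /AN /AP /FQ /FP /= ?oppr0 ?expR0 ?opprK.
  split; [congr EFin; field; exact: hmu|].
  split; [congr EFin; field; exact: hmu|].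
  split; [congr EFin; field; exact: hmu|].
  congr EFin; field; exact: hmu.
move=> r _.
have e1 : (-1 : R) ^+ (2 * r) = 1 by rewrite exprM sqrrN !expr1n.
have e2 : (-1 : R) ^+ (2 * r).+1 = -1 by rewrite exprS e1 mulr1.
have [m0|m0|m0] := ltgtP mu 0; last by rewrite m0 eqxx in hmu.
  rewrite moment_neg // /AN /AP /FQ /FP ?PolN' ?oppr0 ?Pol_at0 ?expr1n ?mul1r ?opprK.
  rewrite ?expR0 ?oppr0 ?expR0 e1 e2.
  congr EFin; field; exact: hmu.
rewrite moment_pos // /AN /AP /FQ /FP ?PolN' ?oppr0 ?Pol_at0 ?expr1n ?mul1r ?opprK.
rewrite ?expR0 ?oppr0 ?expR0 e1 e2.
congr EFin; field; exact: hmu.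
Qed.
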